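(* Let $R,S$ be nonnegative integral vectors such that $\mathcal{A}(R,S)$ is a convex-class, and let $A\in\mathcal{A}(R,S)$. Let $I$ and $I'$ be the horizontal intervals of two different rows of $A$. Then at least one of the following holds: (i) $|I|=|I'|=1$; (ii) $I\subseteq I'$ or $I'\subseteq I$; (iii) $I'$ is a 1-shift of $I$. In particular, if $|I|=k$ and $|I'|\ge k+1$ for some $k\ge1$, then $I\subseteq I'$. The analogous statements hold for the vertical intervals of two different columns of $A$. Moreover, for every interchange applicable to a matrix in $\mathcal{A}(R,S)$, the two rows involved either both contain exactly one $1$ or have horizontal intervals forming a 1-shift pair, and likewise the two columns involved either both contain exactly one $1$ or have vertical intervals forming a 1-shift pair.
   Context: $\mathcal{A}(R,S)$ is the set of $(0,1)$-matrices with row sum vector $R$ and column sum vector $S$. A $(0,1)$-matrix is convex if in every row and column the 1's occur consecutively; $\mathcal{A}(R,S)$ is a convex-class if every matrix in it is convex. For $A=[a_{ij}]$, the horizontal interval of row $i$ is $\{j: a_{ij}=1\}$ and the vertical interval of column $j$ is $\{i: a_{ij}=1\}$. For intervals $I=\{k,k+1,\dots,l\}$ and $I'=\{k+1,\dots,l+1\}$ with $k<l$, $I'$ is called a 1-shift of $I$ and vice versa, and $I,I'$ is a 1-shift pair. An interchange replaces a $2\times2$ submatrix $\begin{bmatrix}1&0\\0&1\end{bmatrix}$ by $\begin{bmatrix}0&1\\1&0\end{bmatrix}$ or vice versa. *)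

(* Defs.v *)
From mathcomp Require Import all_boot all_order all_algebra.
Set Implicit Arguments. Unset Strict Implicit. Unset Printing Implicit Defensive.

Definition hint (m n : nat) (A : 'M[bool]_(m, n)) (i : 'I_m) : {set 'I_n} :=
  [set j | A i j].
Definition vint (m n : nat) (A : 'M[bool]_(m, n)) (j : 'I_n) : {set 'I_m} :=
  [set i | A i j].

Definition inClass (m n : nat) (R : 'I_m -> nat) (S : 'I_n -> nat)
  (A : 'M[bool]_(m, n)) : Prop :=
  (forall i, #|hint A i| = R i) /\ (forall j, #|vint A j| = S j).

Definition convex (m n : nat) (A : 'M[bool]_(m, n)) : Prop :=
  (forall (i : 'I_m) (j1 j2 j3 : 'I_n), j1 <= j2 <= j3 -> A i j1 -> A i j3 -> A i j2)
  /\ (forall (j : 'I_n) (i1 i2 i3 : 'I_m), i1 <= i2 <= i3 -> A i1 j -> A i3 j -> A i2 j).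

Definition convex_class (m n : nat) (R : 'I_m -> nat) (S : 'I_n -> nat) : Prop :=
  forall A : 'M[bool]_(m, n), inClass R S A -> convex A.

Definition right_shift (p : nat) (I I' : {set 'I_p}) : Prop :=
  exists k l : nat, k < l /\
    (forall j : 'I_p, j \in I <-> k <= j <= l) /\
    (forall j : 'I_p, j \in I' <-> k.+1 <= j <= l.+1).

Definition one_shift (p : nat) (I I' : {set 'I_p}) : Prop :=
  right_shift I I' \/ right_shift I' I.

(* Main.v *)
Require Import Defs.
From mathcomp Require Import all_boot all_order all_algebra.
From mathcomp Require Import zify.
Set Implicit Arguments. Unset Strict Implicit. Unset Printing Implicit Defensive.

Definition cvx n (X : {set 'I_n}) :=
  forall x y z : 'I_n, x <= y <= z -> x \in X -> z \in X -> y \in X.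

Ltac clean := repeat match goal with
 | H : forall _, _ |- _ => clear H
 | H : is_true (in_mem _ _) |- _ => clear H
 | H : is_true (~~ in_mem _ _) |- _ => clear H
 | H : cvx _ |- _ => clear H
 end.
Ltac lia' := clean; lia.

Definition sshift n (I J : {set 'I_n}) := exists k l : nat,
  [/\ k < l, l.+1 < n, (forall j : 'I_n, j \in I <-> k <= j <= l)
    & (forall j : 'I_n, j \in J <-> k.+1 <= j <= l.+1)].

Lemma exmin n (I : {set 'I_n}) p : p \in I ->
  exists2 a : 'I_n, a \in I & forall x, x \in I -> a <= x.
Proof.
move=> pI; case: (arg_minnP (fun i : 'I_n => val i) pI) => a aI H.
by exists a.
Qed.

Lemma exmax n (I : {set 'I_n}) p : p \in I ->
  exists2 a : 'I_n, a \in I & forall x, x \in I -> x <= a.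
Proof.
move=> pI; case: (arg_maxnP (fun i : 'I_n => val i) pI) => a aI H.
by exists a.
Qed.

Lemma card_one n (X : {set 'I_n}) (a : 'I_n) : a \in X ->
  (forall x, x \in X -> x <= a) -> (forall x, x \in X -> a <= x) -> #|X| = 1.
Proof.
move=> aX H1 H2.
have -> : X = [set a].
  apply/setP => x; rewrite inE; apply/idP/eqP => [xX|->//].
  by apply: val_inj; apply/eqP; rewrite eqn_leq H1 // H2.
by rewrite cards1.
Qed.

Lemma sshift_card n (I J : {set 'I_n}) : sshift I J -> #|I| = #|J|.
Proof.
move=> [k [l [kl ln HI HJ]]].
have -> : J = (@ordS n) @: I.
  apply/setP => j; apply/idP/imsetP.
  - move=> jJ; have /HJ h := jJ; exists (ord_pred j); last by rewrite ord_predK.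
    apply/HI.
    have E : nat_of_ord (ord_pred j) = j.-1.
      rewrite /= (_ : (j + n).-1 = j.-1 + n); last by lia.
      by rewrite modnDr modn_small //; have := ltn_ord j; lia.
    rewrite E; lia.
  - case=> i iI ->; apply/HJ; have /HI h := iI.
    rewrite /= modn_small; lia.
by rewrite card_imset //; apply: ordS_inj.
Qed.

Lemma sshift_one n (I J : {set 'I_n}) : sshift I J -> one_shift I J.
Proof. move=> [k [l [kl ln HI HJ]]]; left; exists k, l; split => //. Qed.

Lemma key_lt n (I J : {set 'I_n}) (p q : 'I_n) :
  cvx I -> cvx J ->
  (forall j1 j2, j1 \in I -> j1 \notin J -> j2 \in J -> j2 \notin I ->
     cvx (j2 |: (I :\ j1)) /\ cvx (j1 |: (J :\ j2))) ->
  p \in I -> p \notin J -> q \in J -> q \notin I -> p < q ->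
  (#|I| = 1 /\ #|J| = 1) \/ sshift I J.
Proof.
move=> cI cJ sw pI pJ qJ qI pq.
have HI : forall x, x \in I -> x < q.
  move=> x xI; rewrite ltnNge; apply/negP => qx.
  by move: qI; rewrite (cI p q x) // (ltnW pq) qx.
have HJ : forall x, x \in J -> p < x.
  move=> x xJ; rewrite ltnNge; apply/negP => xp.
  by move: pJ; rewrite (cJ x p q) // xp (ltnW pq).
have [a aI amin] := exmin pI.
have [b bI bmax] := exmax pI.
have [c cJ' cmin] := exmin qJ.
have [d dJ dmax] := exmax qJ.
have aJ : a \notin J.
  by apply/negP=> aJ; have := HJ _ aJ; have := amin _ pI; lia'.
have dI : d \notin I.
  by apply/negP => dI; have := HI _ dI; have := dmax _ qJ; lia'.
have [cI1 cJ1] := sw a d aI aJ dJ dI.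
have bd : b < d by have := HI _ bI; have := dmax _ qJ; lia'.
have ac : a < c by have := HJ _ cJ'; have := amin _ pI; lia'.
case: (ltnP a b) => ab'; case: (ltnP c d) => cd'.
- right; exists a, b.
  have db : nat_of_ord d = b.+1.
    apply/eqP; rewrite eqn_leq bd andbT leqNgt; apply/negP => lt.
    have zlt : b.+1 < n by have := ltn_ord d; lia'.
    have : Ordinal zlt \in d |: (I :\ a).
      apply: (cI1 b (Ordinal zlt) d).
      + by rewrite /=; apply/andP; split; lia'.
      + rewrite !inE bI andbT; apply/orP; right.
        by apply/negP => /eqP E; rewrite E ltnn in ab'.
      + by rewrite !inE eqxx.
    rewrite !inE => /orP [/eqP zd | /andP [_ zI]].
      by have := congr1 val zd => /= E; lia'.
    by have := bmax _ zI => /=; lia'.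
  have ca : nat_of_ord c = a.+1.
    apply/eqP; rewrite eqn_leq ac andbT leqNgt; apply/negP => lt.
    have zlt : a.+1 < n by have := ltn_ord c; lia'.
    have : Ordinal zlt \in a |: (J :\ d).
      apply: (cJ1 a (Ordinal zlt) c).
      + by rewrite /=; apply/andP; split; lia'.
      + by rewrite !inE eqxx.
      + rewrite !inE cJ' andbT; apply/orP; right.
        by apply/negP => /eqP E; rewrite E ltnn in cd'.
    rewrite !inE => /orP [/eqP zd | /andP [_ zJ]].
      by have := congr1 val zd => /= E; lia'.
    by have := cmin _ zJ => /=; lia'.
  split => //.
  + by have := ltn_ord d; lia'.
  + move=> j; split.
      by move=> jI; rewrite (amin _ jI) (bmax _ jI).
    by move=> h; apply: (cI a j b).
  + move=> j; split.
      by move=> jJ; have := cmin _ jJ; have := dmax _ jJ; move=> h1 h2; apply/andP; split; lia'.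
    by move=> /andP [h1 h2]; apply: (cJ c j d) => //; apply/andP; split; lia'.
- exfalso.
  have bJ : b \notin J by apply/negP=> bJ; have := cmin _ bJ; lia'.
  have [cI2 _] := sw b d bI bJ dJ dI.
  have : b \in d |: (I :\ b).
    apply: (cI2 a b d).
    + by apply/andP; split; lia'.
    + rewrite !inE aI andbT; apply/orP; right.
      by apply/negP => /eqP E; rewrite E ltnn in ab'.
    + by rewrite !inE eqxx.
  rewrite !inE eqxx /= ?andbF ?orbF => /eqP E.
  by have := congr1 val E => /=; lia'.
- exfalso.
  have cI' : c \notin I by apply/negP=> cI'; have := bmax _ cI'; lia'.
  have [_ cJ2] := sw a c aI aJ cJ' cI'.
  have : c \in a |: (J :\ c).
    apply: (cJ2 a c d).
    + by apply/andP; split; lia'.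
    + by rewrite !inE eqxx.
    + rewrite !inE dJ andbT; apply/orP; right.
      by apply/negP => /eqP E; rewrite E ltnn in cd'.
  rewrite !inE eqxx /= ?andbF ?orbF => /eqP E.
  by have := congr1 val E => /=; lia'.
- left; split.
  + apply: (card_one aI) => // x xI; have := bmax _ xI; lia'.
  + apply: (card_one dJ) => // x xJ; have := cmin _ xJ; lia'.
Qed.
Lemma card_sw (T : finType) (X : {set T}) x y :
  x \in X -> y \notin X -> #|y |: (X :\ x)| = #|X|.
Proof.
move=> xX yX; rewrite cardsU1 [in RHS](cardsD1 x) xX in_setD1 (negbTE yX) andbF.
by [].
Qed.

Lemma swap_class m n R S (A : 'M[bool]_(m,n)) i1 i2 j1 j2 :
  inClass R S A -> i1 != i2 -> j1 != j2 -> A i1 j1 -> A i2 j2 ->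
  ~~ A i1 j2 -> ~~ A i2 j1 ->
  exists B : 'M[bool]_(m,n), [/\ inClass R S B,
    hint B i1 = j2 |: (hint A i1 :\ j1) & hint B i2 = j1 |: (hint A i2 :\ j2)].
Proof.
move=> [HR HS] i12 j12 a11 a22 a12 a21.
have i21 : i2 != i1 by rewrite eq_sym.
have j21 : j2 != j1 by rewrite eq_sym.
pose B : 'M[bool]_(m,n) := (\matrix_(x < m, y < n) (if x == i1 then (if y == j1 then false else if y == j2 then true else A x y)
  else if x == i2 then (if y == j1 then true else if y == j2 then false else A x y) else A x y))%R.
have hB1 : hint B i1 = j2 |: (hint A i1 :\ j1).
  apply/setP => y; rewrite !inE mxE eqxx.
  case: (eqVneq y j1) => [->|yj1]; first by rewrite (negbTE j12).
  by case: (eqVneq y j2) => [->|yj2] //=.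
have hB2 : hint B i2 = j1 |: (hint A i2 :\ j2).
  apply/setP => y; rewrite !inE mxE eqxx (negbTE i21).
  case: (eqVneq y j1) => [->|yj1]; first by [].
  by case: (eqVneq y j2) => [->|yj2] //=; rewrite eqxx.
have hBo : forall x, x != i1 -> x != i2 -> hint B x = hint A x.
  by move=> x h1 h2; apply/setP => y; rewrite !inE mxE (negbTE h1) (negbTE h2).
have vB1 : vint B j1 = i2 |: (vint A j1 :\ i1).
  apply/setP => x; rewrite !inE mxE eqxx.
  case: (eqVneq x i1) => [->|xi1]; first by rewrite (negbTE i12).
  by case: (eqVneq x i2) => [->|xi2] //=.
have vB2 : vint B j2 = i1 |: (vint A j2 :\ i2).
  apply/setP => x; rewrite !inE mxE eqxx (negbTE j21).
  case: (eqVneq x i1) => [->|xi1]; first by [].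
  by case: (eqVneq x i2) => [->|xi2] //=; rewrite eqxx.
have vBo : forall y, y != j1 -> y != j2 -> vint B y = vint A y.
  move=> y h1 h2; apply/setP => x; rewrite !inE mxE (negbTE h1) (negbTE h2).
  by case: (x == i1); case: (x == i2).
exists B; split => //; split.
- move=> x; case: (eqVneq x i1) => [->|xi1].
    by rewrite hB1 card_sw ?inE.
  case: (eqVneq x i2) => [->|xi2].
    by rewrite hB2 card_sw ?inE.
  by rewrite hBo.
- move=> y; case: (eqVneq y j1) => [->|yj1].
    by rewrite vB1 card_sw ?inE.
  case: (eqVneq y j2) => [->|yj2].
    by rewrite vB2 card_sw ?inE.
  by rewrite vBo.
Qed.

Definition disj n (I J : {set 'I_n}) :=
  (#|I| = 1 /\ #|J| = 1) \/ (I \subset J \/ J \subset I) \/ (sshift I J \/ sshift J I).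

Lemma key n (I J : {set 'I_n}) :
  cvx I -> cvx J ->
  (forall j1 j2, j1 \in I -> j1 \notin J -> j2 \in J -> j2 \notin I ->
     cvx (j2 |: (I :\ j1)) /\ cvx (j1 |: (J :\ j2))) ->
  disj I J.
Proof.
move=> cI cJ sw.
case: (boolP (I \subset J)) => [IJ|/subsetPn [p pI pJ]]; first by right; left; left.
case: (boolP (J \subset I)) => [JI|/subsetPn [q qJ qI]]; first by right; left; right.
case: (ltngtP p q) => [pq|qp|pq].
- by case: (key_lt cI cJ sw pI pJ qJ qI pq) => [h|h]; [left | right; right; left].
- have sw' : forall j1 j2, j1 \in J -> j1 \notin I -> j2 \in I -> j2 \notin J ->
      cvx (j2 |: (J :\ j1)) /\ cvx (j1 |: (I :\ j2)).
    by move=> j1 j2 h1 h2 h3 h4; have [u v] := sw j2 j1 h3 h4 h1 h2.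
  case: (key_lt cJ cI sw' qJ qI pI pJ qp) => [[h1 h2]|h]; first by left.
  by right; right; right.
- have E : p = q by apply: val_inj.
  by rewrite E (negbTE qI) in pI.
Qed.

Lemma from_disj n (I J : {set 'I_n}) : disj I J ->
  ((#|I| = 1 /\ #|J| = 1) \/ (I \subset J \/ J \subset I) \/ one_shift I J)
  /\ (forall k : nat, 1 <= k -> #|I| = k -> k.+1 <= #|J| -> I \subset J).
Proof.
move=> D; split.
  case: D => [h|[h|[h|h]]]; [by left | by right; left | |].
    by right; right; apply: sshift_one.
  by right; right; case: (sshift_one h) => [u|u]; [right|left].
move=> k k1 cI cJ.
case: D => [[h1 h2]|[[h|h]|[h|h]]] //.
- by rewrite h2 -cI in cJ; lia.
- by have := subset_leq_card h; lia.
- by have := sshift_card h; lia.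
- by have := sshift_card h; lia.
Qed.

Lemma nsub n (I J : {set 'I_n}) x y : x \in I -> x \notin J -> y \in J -> y \notin I ->
  disj I J -> (#|I| = 1 /\ #|J| = 1) \/ one_shift I J.
Proof.
move=> xI xJ yJ yI D; case: (from_disj D) => [[h|[[h|h]|h]] _]; [by left| | |by right].
- by move/subsetP: h => /(_ x xI); rewrite (negbTE xJ).
- by move/subsetP: h => /(_ y yJ); rewrite (negbTE yI).
Qed.

Lemma hint_tr m n (A : 'M[bool]_(m,n)) j : hint A^T j = vint A j.
Proof. by apply/setP => i; rewrite !inE mxE. Qed.
Lemma vint_tr m n (A : 'M[bool]_(m,n)) i : vint A^T i = hint A i.
Proof. by apply/setP => j; rewrite !inE mxE. Qed.

Lemma inClass_tr m n R S (A : 'M[bool]_(m,n)) : inClass R S A -> inClass S R A^T.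
Proof. by move=> [h1 h2]; split => x; rewrite ?hint_tr ?vint_tr. Qed.

Lemma cc_tr m n (R : 'I_m -> nat) (S : 'I_n -> nat) : convex_class R S -> convex_class S R.
Proof.
move=> cc B hB.
have [c1 c2] := cc _ (inClass_tr hB).
split.
- move=> i j1 j2 j3 h a1 a3; have := c2 i j1 j2 j3 h; rewrite !mxE; exact.
- move=> j i1 i2 i3 h a1 a3; have := c1 j i1 i2 i3 h; rewrite !mxE; exact.
Qed.

Lemma cvx_hint m n (A : 'M[bool]_(m,n)) i : convex A -> cvx (hint A i).
Proof. by move=> [c _] x y z h; rewrite !inE; exact: c. Qed.

Lemma rows_disj m n R S (A : 'M[bool]_(m,n)) i1 i2 :
  convex_class R S -> inClass R S A -> i1 != i2 -> disj (hint A i1) (hint A i2).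
Proof.
move=> cc hA i12; apply: key; try exact: cvx_hint (cc _ hA).
move=> j1 j2 h1 h2 h3 h4.
have j12 : j1 != j2 by apply/eqP => E; rewrite E h3 in h2.
rewrite !inE in h1 h2 h3 h4.
have [B [hB e1 e2]] := swap_class hA i12 j12 h1 h3 h4 h2.
by rewrite -e1 -e2; split; apply: cvx_hint (cc _ hB).
Qed.
Unset Implicit Arguments.
Theorem mainTheorem9 (m n : nat) (R : 'I_m -> nat) (S : 'I_n -> nat) :
  convex_class R S ->
  (forall A : 'M[bool]_(m, n), inClass R S A ->
     (* rows *)
     (forall i1 i2 : 'I_m, i1 != i2 ->
        ((#|hint A i1| = 1 /\ #|hint A i2| = 1)
         \/ (hint A i1 \subset hint A i2 \/ hint A i2 \subset hint A i1)
         \/ one_shift (hint A i1) (hint A i2))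
        /\ (forall k : nat, 1 <= k -> #|hint A i1| = k -> k.+1 <= #|hint A i2| ->
              hint A i1 \subset hint A i2))
     /\
     (* columns *)
     (forall j1 j2 : 'I_n, j1 != j2 ->
        ((#|vint A j1| = 1 /\ #|vint A j2| = 1)
         \/ (vint A j1 \subset vint A j2 \/ vint A j2 \subset vint A j1)
         \/ one_shift (vint A j1) (vint A j2))
        /\ (forall k : nat, 1 <= k -> #|vint A j1| = k -> k.+1 <= #|vint A j2| ->
              vint A j1 \subset vint A j2)))
  /\
  (* interchanges: submatrix on rows i1,i2 and columns j1,j2 equal to I_2 (or its
     anti-diagonal version, covered by swapping the roles of j1 and j2) *)
  (forall A : 'M[bool]_(m, n), inClass R S A ->
     forall (i1 i2 : 'I_m) (j1 j2 : 'I_n), i1 != i2 -> j1 != j2 ->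
       A i1 j1 -> A i2 j2 -> ~~ A i1 j2 -> ~~ A i2 j1 ->
       ((#|hint A i1| = 1 /\ #|hint A i2| = 1) \/ one_shift (hint A i1) (hint A i2))
       /\ ((#|vint A j1| = 1 /\ #|vint A j2| = 1) \/ one_shift (vint A j1) (vint A j2))).
Proof.
move=> cc; split.
- move=> A hA; split.
  + by move=> i1 i2 h; exact: from_disj (rows_disj cc hA h).
  + move=> j1 j2 h; rewrite -!hint_tr.
    exact: from_disj (rows_disj (cc_tr cc) (inClass_tr hA) h).
- move=> A hA i1 i2 j1 j2 i12 j12 a11 a22 a12 a21; split.
  + apply: (@nsub _ _ _ j1 j2); rewrite ?inE //.
    exact: rows_disj cc hA i12.
  + rewrite -!hint_tr; apply: (@nsub _ _ _ i1 i2); rewrite ?inE ?mxE //.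
    exact: rows_disj (cc_tr cc) (inClass_tr hA) j12.
Qed.
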